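(* Assume that $R,\dot R,\ddot R,\dddot R$ satisfy the bicolored tetrahedron equations for every $\sigma\in\mathbb{Z}/2\mathbb{Z}$ and all spectral parameters, that $\dddot R^{[\sigma]}(r_1,r_2,r_3)$ is invertible for all $\sigma$ and all $r_1,r_2,r_3\in C$, and that for every $\sigma$ and all parameters of two planes $3<4$ (larger than all $1_l$ and $2_m$) the trace reduction $\ddot{\mathbf R}^{[\sigma]}_{34}$ is invertible. Then for all $\sigma\in\mathbb{Z}/2\mathbb{Z}$ and all $r,r'\in C$, $$T^{[\sigma]}(r)\,\dot T^{[\sigma+1]}(r')=\dot T^{[\sigma]}(r')\,T^{[\sigma+1]}(r)$$ as operators on $W=\bigotimes_{l,m}V_{(1_l2_m)}$.
   Context: Let $V$ be a finite-dimensional complex vector space and $C$ a set (of spectral parameters). Let $R,\dot R,\ddot R,\dddot R:\mathbb{Z}/2\mathbb{Z}\times C^3\to\mathrm{End}(V\otimes V\otimes V)$ be maps; write $X^{[\sigma]}(r_1,r_2,r_3)$ for the value of $X\in\{R,\dot R,\ddot R,\dddot R\}$ at $(\sigma,r_1,r_2,r_3)$. Superscript colors $[\sigma]$ are always read modulo 2. Notation: consider a finite totally ordered set of ''planes'', each plane $\alpha$ carrying a parameter $r_\alpha\in C$. For each pair $\alpha<\beta$ let $V_{(\alpha\beta)}$ be a copy of $V$. For $\alpha<\beta<\gamma$, $X^{[\sigma]}_{(\alpha\beta\gamma)}$ denotes the operator on the tensor product of all the spaces $V_{(\cdot\cdot)}$ under consideration that acts as $X^{[\sigma]}(r_\alpha,r_\beta,r_\gamma)$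 on $V_{(\alpha\beta)}\otimes V_{(\alpha\gamma)}\otimes V_{(\beta\gamma)}$ (in this order) and as the identity on all other factors. Bicolored tetrahedron equations (BTE$[\sigma]$): for any four planes $1<2<3<4$ with arbitrary parameters $r_1,r_2,r_3,r_4\in C$, on $V_{(12)}\otimes V_{(13)}\otimes V_{(14)}\otimes V_{(23)}\otimes V_{(24)}\otimes V_{(34)}$, $$R^{[\sigma]}_{(123)}\dot R^{[\sigma+1]}_{(124)}\ddot R^{[\sigma]}_{(134)}\dddot R^{[\sigma+1]}_{(234)}=\dddot R^{[\sigma]}_{(234)}\ddot R^{[\sigma+1]}_{(134)}\dot R^{[\sigma]}_{(124)}R^{[\sigma+1]}_{(123)}.$$ Fix integers $L,M\ge1$, planes $1_1<\dots<1_{2L}<2_1<\dots<2_{2M}$ with fixed arbitrary parameters $r_{1_l},r_{2_m}\in C$. Trace reduction: for planes $\alpha<\beta$ larger than all $1_l$, define $$\mathbf{R}^{[\sigma]}_{\alpha\beta}:=\mathrm{Tr}_{V_{(\alpha\beta)}}\Bigl(R^{[\sigma+1]}_{(1_1\alpha\beta)}R^{[\sigma+2]}_{(1_2\alpha\beta)}\cdots R^{[\sigma+2L]}_{(1_{2L}\alpha\beta)}\Bigr)$$ (partial trace over $V_{(\alpha\beta)}$), an operator on $\bigotimes_l(V_{(1_l\alpha)}\otimes V_{(1_l\beta)})$; $\dot{\mathbf R},\ddot{\mathbf R}$ are defined likewise from $\dot R,\ddot R$. Layer transfer matrix: for $r\in C$, let $3$ be an extra plane larger than all $2_m$ with parameter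 $r_3=r$, and set $$T^{[\sigma]}(r):=\mathrm{Tr}_{\bigotimes_l V_{(1_l3)}}\Bigl(\mathbf R^{[\sigma+1]}_{2_1 3}\,\mathbf R^{[\sigma+2]}_{2_2 3}\cdots\mathbf R^{[\sigma+2M]}_{2_{2M}3}\Bigr),$$ an operator on $W=\bigotimes_{l,m}V_{(1_l2_m)}$ (it depends only on $r$, not on the label of the extra plane). $\dot T^{[\sigma]}(r)$ is defined the same way with $\mathbf R$ replaced by $\dot{\mathbf R}$. *)

(* Defs.v *)
From HB Require Import structures.
From mathcomp Require Import all_boot all_order all_algebra.
From mathcomp Require Import reals.
From mathcomp.real_closed Require Import complex.

Set Implicit Arguments.
Unset Strict Implicit.
Unset Printing Implicit Defensive.

Import Order.TTheory GRing.Theory Num.Theory.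
Local Open Scope ring_scope.

(* V = K^d with standard basis 'I_d.  A tensor product of copies of V
   indexed by a finite set of labels S has as basis the configurations
   {ffun S -> 'I_d}; an operator on it is given by its matrix elements. *)
Section Tensor.
Variables (K : fieldType) (d : nat).

Definition config (S : finType) := {ffun S -> 'I_d}.
Definition Op (S : finType) := config S -> config S -> K.

Definition opmul (S : finType) (X Y : Op S) : Op S :=
  fun x y => \sum_(z : config S) X x z * Y z y.
Definition opone (S : finType) : Op S := fun x y => (x == y)%:R.
Definition opinvertible (S : finType) (X : Op S) : Prop :=
  exists Y : Op S, opmul X Y = @opone S /\ opmul Y X = @opone S.

Definition opprod (S : finType) (n : nat) (F : 'I_n -> Op S) : Op S :=
  \big[@opmul S/@opone S]_(i < n) F i.

(* embedding: X acting on the factors f(i) (in the order of S'),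
   identity on all factors not in the image of f *)
Definition emb (S' S : finType) (f : S' -> S) (X : Op S') : Op S :=
  fun x y => X [ffun i => x (f i)] [ffun i => y (f i)]
             * ([forall s, (s \in codom f) || (x s == y s)])%:R.

(* partial trace over all factors of S not in the image of the (injective)
   map g : S' -> S of kept factors; result is an operator on S'. *)
Definition glue (S' S : finType) (g : S' -> S) (u : config S) (y : config S')
  : config S :=
  [ffun s => if [pick s' | g s' == s] is Some s' then y s' else u s].
Definition ptrace (S' S : finType) (g : S' -> S) (X : Op S) : Op S' :=
  fun x y => \sum_(u : config S | [forall s', u (g s') == x s'])
               X u (glue g u y).
End Tensor.

(* Maps Z/2 x C^3 -> End(V (x) V (x) V); the three tensor slots 0,1,2 of
   X(r1,r2,r3) correspond to V_(ab), V_(ac), V_(bc) for planes a<b<c. *)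
Definition RMap (K : fieldType) (d : nat) (C : Type) :=
  'Z_2 -> C -> C -> C -> Op K d 'I_3.

(* Bicolored tetrahedron equations.  Planes 1<2<3<4; the six spaces
   V_(12),V_(13),V_(14),V_(23),V_(24),V_(34) are labelled 0,...,5 of 'I_6. *)
Definition lab (i : nat) : 'I_6 := inord i.
Definition f123 (i : 'I_3) : 'I_6 := lab (nth 0%N [:: 0; 1; 3]%N i).
Definition f124 (i : 'I_3) : 'I_6 := lab (nth 0%N [:: 0; 2; 4]%N i).
Definition f134 (i : 'I_3) : 'I_6 := lab (nth 0%N [:: 1; 2; 5]%N i).
Definition f234 (i : 'I_3) : 'I_6 := lab (nth 0%N [:: 3; 4; 5]%N i).

Definition BTE (K : fieldType) (d : nat) (C : Type)
  (R R1 R2 R3 : RMap K d C) (sigma : 'Z_2) : Prop :=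
  forall r1 r2 r3 r4 : C,
    opmul (opmul (opmul (emb f123 (R sigma r1 r2 r3))
                        (emb f124 (R1 (sigma + 1) r1 r2 r4)))
                 (emb f134 (R2 sigma r1 r3 r4)))
          (emb f234 (R3 (sigma + 1) r2 r3 r4))
  = opmul (opmul (opmul (emb f234 (R3 sigma r2 r3 r4))
                        (emb f134 (R2 (sigma + 1) r1 r3 r4)))
                 (emb f124 (R1 sigma r1 r2 r4)))
          (emb f123 (R (sigma + 1) r1 r2 r3)).

(* Planes 1_1<...<1_{2L} (indexed l : 'I_(2L), plane
   1_{l+1}, parameter r1 l) and two larger planes a<b with parameters ra rb.
   Spaces: Some (l,false) = V_(1_{l+1} a), Some (l,true) = V_(1_{l+1} b),
   None = V_(ab). *)
Definition trlab (L : nat) (l : 'I_(2 * L)) (i : 'I_3) : option ('I_(2 * L) * bool) :=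
  if i == 0 :> nat then Some (l, false)
  else if i == 1 :> nat then Some (l, true) else None.

Definition boldR (K : fieldType) (d : nat) (C : Type) (L : nat)
  (r1 : 'I_(2 * L) -> C) (X : RMap K d C) (sigma : 'Z_2) (ra rb : C)
  : Op K d ('I_(2 * L) * bool)%type :=
  ptrace (@Some _)
    (opprod (fun l : 'I_(2 * L) =>
       emb (trlab l) (X (sigma + (l.+1)%:R) (r1 l) ra rb))).

(* Planes 2_1<...<2_{2M} (m : 'I_(2M), plane
   2_{m+1}, parameter r2 m) and the extra plane 3 with parameter r.
   Spaces: inl (l,m) = V_(1_{l+1} 2_{m+1}), inr l = V_(1_{l+1} 3). *)
Definition tlab (L M : nat) (m : 'I_(2 * M)) (p : 'I_(2 * L) * bool)
  : ('I_(2 * L) * 'I_(2 * M) + 'I_(2 * L))%type :=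
  if p.2 then inr p.1 else inl (p.1, m).

Definition Tlayer (K : fieldType) (d : nat) (C : Type) (L M : nat)
  (r1 : 'I_(2 * L) -> C) (r2 : 'I_(2 * M) -> C) (X : RMap K d C)
  (sigma : 'Z_2) (r : C) : Op K d ('I_(2 * L) * 'I_(2 * M))%type :=
  ptrace (@inl _ _)
    (opprod (fun m : 'I_(2 * M) =>
       emb (@tlab L M m) (boldR r1 X (sigma + (m.+1)%:R) (r2 m) r))).

(* Main.v *)
From Stdlib Require Import FunctionalExtensionality.
Require Import Defs.
From HB Require Import structures.
From mathcomp Require Import all_boot all_order all_algebra.
From mathcomp Require Import reals.
From mathcomp.real_closed Require Import complex.
Set Implicit Arguments.
Unset Strict Implicit.
Unset Printing Implicit Defensive.
Import GRing.Theory.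
Local Open Scope ring_scope.

Section Basic.
Variables (K : fieldType) (d : nat).
Local Notation Op := (Op K d).
Local Notation config := (config d).

Lemma op_ext (S : finType) (X Y : Op S) : (forall x y, X x y = Y x y) -> X = Y.
Proof. by move=> H; do 2 (apply: functional_extensionality => ?); apply: H. Qed.

Lemma opmulA (S : finType) : associative (@opmul K d S).
Proof.
move=> X Y Z; apply: op_ext => x y; symmetry; rewrite /opmul.

under eq_bigr => z _ do rewrite big_distrl /=.
rewrite exchange_big /=; apply: eq_bigr => w _.
rewrite big_distrr /=; apply: eq_bigr => z _; by rewrite mulrA.
Qed.

Lemma opmul1 (S : finType) : left_id (@opone K d S) (@opmul K d S).
Proof.
move=> X; apply: op_ext => x y; rewrite /opmul /opone.
rewrite (bigD1 x) //= eqxx mul1r big1 ?addr0 // => z /negbTE.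
by rewrite eq_sym => ->; rewrite mul0r.
Qed.

Lemma opmul1r (S : finType) : right_id (@opone K d S) (@opmul K d S).
Proof.
move=> X; apply: op_ext => x y; rewrite /opmul /opone.
rewrite (bigD1 y) //= eqxx mulr1 big1 ?addr0 // => z /negbTE ->.
by rewrite mulr0.
Qed.

HB.instance Definition _ (S : finType) :=
  Monoid.isLaw.Build (Op S) (@opone K d S) (@opmul K d S)
    (@opmulA S) (@opmul1 S) (@opmul1r S).

End Basic.

Definition eqon (d : nat) (S : finType) (A : {set S}) (x y : config d S) : bool :=
  [forall s in A, x s == y s].
Definition mg (d : nat) (S : finType) (A : {set S}) (x z : config d S) : config d S :=
  [ffun s => if s \in A then x s else z s].
Definition cset (S' S : finType) (f : S' -> S) : {set S} := [set t | t \in codom f].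
Definition ext (d : nat) (S' S : finType) (f : S' -> S) (x : config d S) (u : config d S') :
  config d S := [ffun t => if [pick s | f s == t] is Some s then u s else x t].

Section Eqon.
Variables (d : nat).
Local Notation config := (config d).

Lemma eqonP (S : finType) (A : {set S}) (x y : config S) :
  reflect (forall s, s \in A -> x s = y s) (eqon A x y).
Proof.
apply: (iffP forallP) => H s.
  by move=> sA; move: (H s); rewrite sA => /eqP.
by apply/implyP => /H ->.
Qed.

Lemma mgE (S : finType) (A : {set S}) (x z : config S) s :
  mg A x z s = if s \in A then x s else z s.
Proof. by rewrite ffunE. Qed.

Lemma csetP (S' S : finType) (f : S' -> S) t : reflect (exists s, t = f s) (t \in cset f).
Proof. rewrite inE; apply: (iffP codomP) => [[s ->]|[s ->]]; by exists s. Qed.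

Lemma cset_f (S' S : finType) (f : S' -> S) s : f s \in cset f.
Proof. by apply/csetP; exists s. Qed.

Lemma ext_comp (S' S : finType) (f : S' -> S) (x : config S) (u : config S') :
  injective f -> [ffun s => ext f x u (f s)] = u.
Proof.
move=> fI; apply/ffunP => s; rewrite !ffunE.
case: pickP => [s' /eqP /fI -> //|H].
by move: (H s); rewrite eqxx.
Qed.

Lemma ext_out (S' S : finType) (f : S' -> S) (x : config S) (u : config S') t :
  t \notin cset f -> ext f x u t = x t.
Proof.
move=> Ht; rewrite ffunE; case: pickP => // s /eqP E.
by move: Ht; rewrite -E cset_f.
Qed.

Lemma ext_off (S' S : finType) (f : S' -> S) (x : config S) (u : config S') :
  eqon (~: cset f) (ext f x u) x.
Proof. by apply/eqonP => t; rewrite inE => /ext_out. Qed.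

Lemma ext_in (S' S : finType) (f : S' -> S) (x : config S) (u : config S') s :
  injective f -> ext f x u (f s) = u s.
Proof.
move=> fI; rewrite ffunE; case: pickP => [s' /eqP /fI -> //|H].
by move: (H s); rewrite eqxx.
Qed.

Lemma sum_reindex_emb (K : fieldType) (S' S : finType) (f : S' -> S) (x : config S)
  (F : config S -> K) : injective f ->
  \sum_(w | eqon (~: cset f) w x) F w = \sum_(u : config S') F (ext f x u).
Proof.
move=> fI.
rewrite (reindex_onto (ext f x) (fun w : config S => [ffun s => w (f s)])).
  by apply: eq_bigl => u; rewrite ext_off ext_comp // eqxx.
move=> w /eqonP Hw; apply/ffunP => t; rewrite ffunE.
case: pickP => [s /eqP <-|H]; first by rewrite ffunE.
rewrite Hw //; rewrite inE; apply/negP => /csetP [s Es].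
by move: (H s); rewrite Es eqxx.
Qed.

End Eqon.

Section Emb.
Variables (K : fieldType) (d : nat).
Local Notation Op := (Op K d).
Local Notation config := (config d).

Lemma embE (S' S : finType) (f : S' -> S) (X : Op S') x y :
  emb f X x y = X [ffun i => x (f i)] [ffun i => y (f i)] * (eqon (~: cset f) x y)%:R.
Proof.
rewrite /emb; congr (_ * (_ %:R)); congr (nat_of_bool _).
apply/idP/idP => [/forallP H|/eqonP H].
  apply/eqonP => s; rewrite !inE => Hs; move: (H s).
  by rewrite (negbTE Hs) /= => /eqP.
apply/forallP => s; case Hs: (s \in codom f) => //=; apply/eqP/H.
by rewrite !inE Hs.
Qed.

End Emb.

Section EqonMore.
Variables (d : nat) (S : finType).
Local Notation config := (config d S).
Implicit Types (A B : {set S}) (x y z : config).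

Lemma eqon_refl A x : eqon A x x.
Proof. by apply/eqonP. Qed.
Lemma eqon_sym A x y : eqon A x y = eqon A y x.
Proof. by apply/eqonP/eqonP => H s /H. Qed.
Lemma eqon_trans A x y z : eqon A x y -> eqon A y z -> eqon A x z.
Proof. by move=> /eqonP H1 /eqonP H2; apply/eqonP => s Hs; rewrite H1 ?H2. Qed.
Lemma eqon_transl A x x' y : eqon A x x' -> eqon A x y = eqon A x' y.
Proof.
move=> H; apply/idP/idP => H'; apply: eqon_trans H' => //.
by rewrite eqon_sym.
Qed.
Lemma eqon_transr A x y y' : eqon A y y' -> eqon A x y = eqon A x y'.
Proof. by move=> H; rewrite eqon_sym (eqon_transl _ H) eqon_sym. Qed.
Lemma eqon_sub A B x y : A \subset B -> eqon B x y -> eqon A x y.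
Proof. by move=> /subsetP sAB /eqonP H; apply/eqonP => s /sAB /H. Qed.
Lemma eqonU A B x y : eqon (A :|: B) x y = eqon A x y && eqon B x y.
Proof.
apply/eqonP/andP => [H|[/eqonP H1 /eqonP H2] s].
  by split; apply/eqonP => s Hs; apply: H; rewrite inE Hs ?orbT.
by rewrite inE => /orP[/H1|/H2].
Qed.
Lemma eqon0 x y : eqon set0 x y.
Proof. by apply/eqonP => s; rewrite inE. Qed.
Lemma eqonT x y : eqon setT x y = (x == y).
Proof.
apply/eqonP/eqP => [H|-> //]; apply/ffunP => s; exact: H.
Qed.
Lemma eqon_split A x y : (x == y) = eqon A x y && eqon (~: A) x y.
Proof. by rewrite -eqonU setUCr eqonT. Qed.
Lemma mg_eqon A x z : eqon A (mg A x z) x.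
Proof. by apply/eqonP => s Hs; rewrite mgE Hs. Qed.
Lemma mg_eqonC A x z : eqon (~: A) (mg A x z) z.
Proof. by apply/eqonP => s; rewrite inE mgE => /negbTE ->. Qed.
Lemma mg_id A x z : eqon (~: A) x z -> mg A x z = x.
Proof.
move=> /eqonP H; apply/ffunP => s; rewrite mgE; case: ifP => // Hs.
by rewrite H // inE Hs.
Qed.
Lemma mg_eq A x z x' z' : eqon A x x' -> eqon (~: A) z z' -> mg A x z = mg A x' z'.
Proof.
move=> /eqonP H1 /eqonP H2; apply/ffunP => s; rewrite !mgE; case: ifP => Hs.
  exact: H1.
by apply: H2; rewrite inE Hs.
Qed.
Lemma ffun_eq (S' : finType) (f : S' -> S) x y :
  eqon (cset f) x y -> [ffun i => x (f i)] = [ffun i => y (f i)].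
Proof.
move=> /eqonP H; apply/ffunP => i; rewrite !ffunE; apply: H; exact: cset_f.
Qed.

End EqonMore.

Section EmbMore.
Variables (K : fieldType) (d : nat).
Local Notation Op := (Op K d).
Local Notation config := (config d).

Lemma emb_mul (S' S : finType) (f : S' -> S) (X Y : Op S') : injective f ->
  emb f (opmul X Y) = opmul (emb f X) (emb f Y).
Proof.
move=> fI; apply: op_ext => x y; rewrite embE /opmul.
under [RHS]eq_bigr do rewrite !embE.
rewrite (bigID (fun z => eqon (~: cset f) z x)) /=.
rewrite [X in _ + X]big1 ?addr0; last first.
  by move=> z Hz; rewrite eqon_sym (negbTE Hz) mulr0 mul0r.
rewrite sum_reindex_emb // big_distrl /=; apply: eq_bigr => u _.
rewrite ext_comp // [eqon _ x (ext _ _ _)]eqon_sym ext_off mulr1.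
by rewrite (eqon_transl _ (ext_off f x u)) mulrA.
Qed.

Lemma emb_one (S' S : finType) (f : S' -> S) : emb f (@opone K d S') = @opone K d S.
Proof.
apply: op_ext => x y; rewrite embE /opone -natrM mulnb.
congr ((nat_of_bool _)%:R).
rewrite (eqon_split (cset f)); congr (_ && _).
apply/eqP/idP => [E|H]; last exact: ffun_eq.
apply/eqonP => s /csetP [i ->].
by move/ffunP: E => /(_ i); rewrite !ffunE.
Qed.

Lemma emb_comp (S'' S' S : finType) (g : S' -> S) (f : S'' -> S') (X : Op S'') :
  injective g -> emb g (emb f X) = emb (g \o f) X.
Proof.
move=> gI; apply: op_ext => x y; rewrite !embE -mulrA -natrM mulnb.
have Ex : forall z : config S, [ffun i => [ffun j => z (g j)] (f i)] = [ffun i => z ((g \o f) i)].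
  by move=> z; apply/ffunP => i; rewrite !ffunE.
rewrite !Ex; congr (_ * (nat_of_bool _)%:R).
apply/andP/eqonP => [[/eqonP H1 /eqonP H2] s|H].
  rewrite inE => Hs; case: (boolP (s \in cset g)) => Hg; last by apply: H2; rewrite inE.
  move: Hg => /csetP [t Et]; subst s.
  have := H1 t; rewrite !ffunE; apply; rewrite inE; apply/negP; case/csetP => u Eu.
  by move: Hs; rewrite Eu; move/negP; apply; exact: (cset_f (g \o f)).
split; apply/eqonP => s; rewrite inE => Hs.
  rewrite !ffunE; apply: H; rewrite inE; apply/negP; case/csetP => u /= /gI Eu.
  by move: Hs; rewrite Eu cset_f.
apply: H; rewrite inE; apply/negP; case/csetP => u Eu.
by move: Hs; rewrite Eu /= cset_f.
Qed.

End EmbMore.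

Definition ptrT (K : fieldType) (d : nat) (S : finType) (T : {set S}) (X : Op K d S) : Op K d S :=
  fun x y => (eqon T x y)%:R * \sum_(u | eqon (~: T) u x) X u (mg T u y).
Definition supp (K : fieldType) (d : nat) (S : finType) (A : {set S}) (X : Op K d S) : Prop :=
  forall x y z, X x y = (eqon (~: A) x y)%:R * X (mg A x z) (mg A y z).

Section Supp.
Variables (K : fieldType) (d : nat) (S : finType).
Local Notation Op := (Op K d S).
Local Notation config := (config d S).
Implicit Types (A B T : {set S}) (X Y Z : Op) (x y z : config).

Lemma sum_collapse (I : finType) (P : pred I) (F : I -> K) i0 :
  P i0 -> (forall i, P i -> i != i0 -> F i = 0) -> \sum_(i | P i) F i = F i0.
Proof.
move=> P0 H; rewrite (bigD1 i0) //= big1 ?addr0 // => i /andP [Pi ni].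
exact: H.
Qed.

Lemma sum_reindex_mg (A : {set S}) x x' (F : config -> K) :
  \sum_(w | eqon (~: A) w x) F w = \sum_(w | eqon (~: A) w x') F (mg A w x).
Proof.
rewrite (reindex_onto (fun w => mg A w x) (fun w => mg A w x')).
  apply: eq_bigl => w; rewrite mg_eqonC /=.
  apply/eqP/idP => [E|H].
    rewrite -E; exact: mg_eqonC.
  apply/ffunP => s; rewrite !mgE; case Hs: (s \in A) => //.
  by move/eqonP: H => H; rewrite H // inE Hs.
move=> w /eqonP H; apply/ffunP => s; rewrite !mgE; case Hs: (s \in A) => //.
by rewrite H // inE Hs.
Qed.

Lemma supp_inv A X x y x' y' : supp A X -> eqon A x x' -> eqon A y y' ->
  eqon (~: A) x y = eqon (~: A) x' y' -> X x y = X x' y'.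
Proof.
move=> sX Hx Hy Hb; rewrite (sX x y x) (sX x' y' x) Hb.
by rewrite (@mg_eq _ _ A x x x' x) ?eqon_refl // (@mg_eq _ _ A y x y' x) ?eqon_refl.
Qed.

Lemma supp_zero A X x y : supp A X -> ~~ eqon (~: A) x y -> X x y = 0.
Proof. by move=> sX H; rewrite (sX x y x) (negbTE H) mul0r. Qed.

Lemma supp_sub A B X : supp A X -> A \subset B -> supp B X.
Proof.
move=> sX /subsetP AB x y z.
case: (boolP (eqon (~: B) x y)) => HB; last first.
  rewrite mul0r; apply: (supp_zero sX); apply: contra HB.
  apply: eqon_sub; apply/subsetP => s; rewrite !inE; apply: contra; exact: AB.
rewrite mul1r; apply: (supp_inv sX).
- by apply/eqonP => s /AB Hs; rewrite mgE Hs.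
- by apply/eqonP => s /AB Hs; rewrite mgE Hs.
move/eqonP: HB => HB.
apply/eqonP/eqonP => H s Hs; move: (H s Hs); rewrite !mgE; case: ifP => // Hb.
all: by rewrite HB // inE Hb.
Qed.

Lemma supp_emb (S' : finType) (f : S' -> S) (X' : Defs.Op K d S') A :
  (forall i, f i \in A) -> supp A (emb f X').
Proof.
move=> HA x y z; rewrite !embE.
have E : forall w, [ffun i => mg A w z (f i)] = [ffun i => w (f i)].
  by move=> w; apply/ffunP => i; rewrite !ffunE HA.
rewrite !E mulrCA -natrM mulnb; congr (_ * (nat_of_bool _)%:R).
apply/eqonP/andP => [H|[/eqonP H1 /eqonP H2] s Hs].
  split; apply/eqonP => s Hs.
    apply: H; rewrite !inE; apply/negP => Hc; move: Hs; rewrite !inE.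
    by case/codomP: Hc => [i ->]; rewrite HA.
  rewrite !mgE; case: ifP => // HsA; exact: H.
case: (boolP (s \in A)) => HsA.
  by move: (H2 s Hs); rewrite !mgE HsA.
by apply: H1; rewrite inE HsA.
Qed.

Lemma supp_one A : supp A (@opone K d S).
Proof.
move=> x y z; rewrite /opone -natrM mulnb; congr (nat_of_bool _)%:R.
rewrite (eqon_split A) andbC; congr (_ && _).
apply/idP/eqP => [H|E]; first by apply: mg_eq => //; apply: eqon_refl.
by rewrite -(eqon_transl _ (mg_eqon A x z)) E; exact: mg_eqon.
Qed.

Lemma supp_mul A X Y : supp A X -> supp A Y -> supp A (opmul X Y).
Proof.
move=> sX sY x y z; rewrite /opmul.
case: (boolP (eqon (~: A) x y)) => Hxy; last first.
  rewrite mul0r big1 // => w _.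
  case: (boolP (eqon (~: A) x w)) => Hxw; last by rewrite (supp_zero sX Hxw) mul0r.
  rewrite (supp_zero sY) ?mulr0 //; apply: contra Hxy => Hwy.
  exact: eqon_trans Hxw Hwy.
rewrite mul1r (bigID (fun w => eqon (~: A) w x)) /= [X in _ + X]big1 ?addr0; last first.
  move=> w Hw; rewrite (supp_zero sX) ?mul0r //; by rewrite eqon_sym.
rewrite [RHS](bigID (fun w => eqon (~: A) w z)) /= [X in _ + X]big1 ?addr0; last first.
  move=> w Hw; rewrite (supp_zero sX) ?mul0r //; rewrite eqon_sym.
  apply: contra Hw => Hw; apply: eqon_trans Hw _; exact: mg_eqonC.
rewrite (sum_reindex_mg _ _ z); apply: eq_bigr => w Hw; congr (_ * _).
  apply: (supp_inv sX).
  - by rewrite eqon_sym mg_eqon.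
  - by rewrite mg_eqon.
  - rewrite (eqon_transr _ (mg_eqonC A w x)) eqon_refl.
    by rewrite (eqon_transl _ (mg_eqonC A x z)) eqon_sym Hw.
apply: (supp_inv sY).
- by rewrite mg_eqon.
- by rewrite eqon_sym mg_eqon.
- rewrite (eqon_transl _ (mg_eqonC A w x)) Hxy.
  by rewrite (eqon_transr _ (mg_eqonC A y z)) Hw.
Qed.

Lemma supp_prod A n (F : 'I_n -> Op) : (forall i, supp A (F i)) -> supp A (opprod F).
Proof.
move=> H; rewrite /opprod; apply: (big_ind (supp A)) => //.
- exact: supp_one.
- by move=> X Y; apply: supp_mul.
Qed.

End Supp.

Section Ptr.
Variables (K : fieldType) (d : nat) (S : finType).
Local Notation Op := (Op K d S).
Local Notation config := (config d S).
Implicit Types (A B T : {set S}) (X Y Z D : Op) (x y z : config).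

Lemma sum_collapse1 (I : finType) (F : I -> K) i0 :
  (forall i, i != i0 -> F i = 0) -> \sum_i F i = F i0.
Proof.
move=> H; rewrite (bigD1 i0) //= big1 ?addr0 // => i /H //.
Qed.

Lemma op_comm A B X Y : supp A X -> supp B Y -> (forall s, s \in A -> s \notin B) ->
  opmul X Y = opmul Y X.
Proof.
move=> sX sY AB; apply: op_ext => x y; rewrite /opmul.
case: (boolP (eqon (~: (A :|: B)) x y)) => Hxy; last first.
  rewrite !big1 // => z _.
    case: (boolP (eqon (~:B) x z)) => H1; last by rewrite (supp_zero sY H1) mul0r.
    case: (boolP (eqon (~:A) z y)) => H2; last by rewrite (supp_zero sX H2) mulr0.
    case/negP: Hxy; apply/eqonP => s; rewrite !inE negb_or => /andP [nA nB].
    by move/eqonP: H1 => ->; [move/eqonP: H2 => ->|]; rewrite // inE.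
  case: (boolP (eqon (~:A) x z)) => H1; last by rewrite (supp_zero sX H1) mul0r.
  case: (boolP (eqon (~:B) z y)) => H2; last by rewrite (supp_zero sY H2) mulr0.
  case/negP: Hxy; apply/eqonP => s; rewrite !inE negb_or => /andP [nA nB].
  by move/eqonP: H1 => ->; [move/eqonP: H2 => ->|]; rewrite // inE.
move/eqonP: Hxy => Hxy.
rewrite (sum_collapse1 (i0 := mg A y x)); last first.
  move=> z nz.
  case: (boolP (eqon (~:A) x z)) => H1; last by rewrite (supp_zero sX H1) mul0r.
  case: (boolP (eqon (~:B) z y)) => H2; last by rewrite (supp_zero sY H2) mulr0.
  case/negP: nz; apply/eqP/ffunP => s; rewrite mgE; case: ifP => Hs.
    by move/eqonP: H2 => ->; rewrite // inE AB.
  by move/eqonP: H1 => ->; rewrite // inE Hs.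
rewrite [RHS](sum_collapse1 (i0 := mg B y x)); last first.
  move=> z nz.
  case: (boolP (eqon (~:B) x z)) => H1; last by rewrite (supp_zero sY H1) mul0r.
  case: (boolP (eqon (~:A) z y)) => H2; last by rewrite (supp_zero sX H2) mulr0.
  case/negP: nz; apply/eqP/ffunP => s; rewrite mgE; case: ifP => Hs.
    move/eqonP: H2 => ->; rewrite // inE; apply/negP => /AB; by rewrite Hs.
  by move/eqonP: H1 => ->; rewrite // inE Hs.
rewrite mulrC; congr (_ * _).
  apply: (supp_inv sY).
  - apply/eqonP => s Hs; rewrite mgE; case: ifP => // HA.
    by move: (AB s HA); rewrite Hs.
  - by rewrite eqon_sym mg_eqon.
  - apply/idP/idP => _; apply/eqonP => s; rewrite inE => Hs; rewrite !mgE ?(negbTE Hs) //;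
    case: ifP => // HA; apply: Hxy; by rewrite !inE negb_or Hs HA.
apply: (supp_inv sX).
- apply/eqonP => s Hs; rewrite mgE; case: ifP => // HB.
  by move: (AB s Hs); rewrite HB.
- by rewrite mg_eqon.
- apply/idP/idP => _; apply/eqonP => s; rewrite inE => Hs; rewrite !mgE ?(negbTE Hs) //;
  case: ifP => // HB; apply: Hxy; by rewrite !inE negb_or Hs HB.
Qed.

Lemma mgmg T x y z : mg T (mg T x y) z = mg T x z.
Proof. by apply/ffunP => s; rewrite !ffunE; case: (s \in T). Qed.

Lemma ptrT_mull T A X Y : supp A X -> (forall s, s \in A -> s \notin T) ->
  ptrT T (opmul X Y) = opmul X (ptrT T Y).
Proof.
move=> sX AT; apply: op_ext => x y; rewrite /ptrT /opmul.
have TA : forall s, s \in T -> s \in ~: A.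
  by move=> s Hs; rewrite inE; apply/negP => /AT; rewrite Hs.
case: (boolP (eqon T x y)) => Hxy; last first.
  rewrite mul0r; symmetry; apply: big1 => z _.
  case: (boolP (eqon (~:A) x z)) => H1; last by rewrite (supp_zero sX H1) mul0r.
  have -> : eqon T z y = false.
    apply/negP => Hzy; case/negP: Hxy; apply: eqon_trans Hzy.
    by move/eqonP: H1 => H1; apply/eqonP => s /TA /H1.
  by rewrite mul0r mulr0.
rewrite mul1r exchange_big /=.
have E1 : forall z, \sum_(u | eqon (~:T) u x) X u z * Y z (mg T u y)
    = X x (mg T x z) * Y z (mg T z y).
  move=> z; rewrite (sum_collapse (i0 := mg T z x)); last first.
  - move=> u Hu nu.
    case: (boolP (eqon (~:A) u z)) => H1; last by rewrite (supp_zero sX H1) mul0r.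
    case/negP: nu; apply/eqP/ffunP => s; rewrite mgE; case: ifP => Hs.
      by move/eqonP: H1 => ->; rewrite // TA.
    by move/eqonP: Hu => ->; rewrite // inE Hs.
  - exact: mg_eqonC.
  rewrite mgmg; congr (_ * _); apply: (supp_inv sX).
  - apply/eqonP => s Hs; rewrite mgE; case: ifP => // HT.
    by move: (AT s Hs); rewrite HT.
  - apply/eqonP => s Hs; rewrite mgE; case: ifP => // HT.
    by move: (AT s Hs); rewrite HT.
  - apply/idP/idP => /eqonP H; apply/eqonP => s Hs; move: (H s Hs); rewrite !mgE;
    by case: ifP.
rewrite (eq_bigr _ (fun z _ => E1 z)).
transitivity (\sum_z \sum_(v | eqon (~:T) v z) X x z * Y v (mg T v y)); last first.
  apply: eq_bigr => z _.
  case: (boolP (eqon (~:A) x z)) => H1; last first.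
    rewrite (supp_zero sX H1) mul0r big1 // => v _; by rewrite mul0r.
  have -> : eqon T z y.
    apply: eqon_trans Hxy; rewrite eqon_sym.
    by move/eqonP: H1 => H1; apply/eqonP => s /TA /H1.
  by rewrite mul1r big_distrr.
rewrite (exchange_big_dep xpredT) //=; apply: eq_bigr => v _.
rewrite (sum_collapse (i0 := mg T x v)); last first.
- move=> z Hz nz.
  case: (boolP (eqon (~:A) x z)) => H1; last by rewrite (supp_zero sX H1) mul0r.
  case/negP: nz; apply/eqP/ffunP => s; rewrite mgE; case: ifP => Hs.
    by move/eqonP: H1 => ->; rewrite // TA.
  by move/eqonP: Hz => ->; rewrite // inE Hs.
- by rewrite eqon_sym mg_eqonC.
by [].
Qed.

Lemma ptrT_mulr T A X Y : supp A X -> (forall s, s \in A -> s \notin T) ->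
  ptrT T (opmul Y X) = opmul (ptrT T Y) X.
Proof.
move=> sX AT; apply: op_ext => x y; rewrite /ptrT /opmul.
have TA : forall s, s \in T -> s \in ~: A.
  by move=> s Hs; rewrite inE; apply/negP => /AT; rewrite Hs.
case: (boolP (eqon T x y)) => Hxy; last first.
  rewrite mul0r; symmetry; apply: big1 => z _.
  case: (boolP (eqon (~:A) z y)) => H1; last by rewrite (supp_zero sX H1) mulr0.
  have -> : eqon T x z = false.
    apply/negP => Hxz; case/negP: Hxy; apply: eqon_trans Hxz _.
    by move/eqonP: H1 => H1; apply/eqonP => s /TA /H1.
  by rewrite !mul0r.
rewrite mul1r.
have E1 : forall u, eqon (~:T) u x -> \sum_z Y u z * X z (mg T u y)
    = \sum_(w | eqon T w x) Y u (mg T u w) * X w y.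
  move=> u Hu; rewrite (bigID (fun z => eqon T z u)) /= [X in _ + X]big1 ?addr0; last first.
    move=> z Hz; rewrite (supp_zero sX) ?mulr0 //; apply: contra Hz => /eqonP H.
    by apply/eqonP => s Hs; move: (H s (TA s Hs)); rewrite mgE Hs.
  have := sum_reindex_mg (~: T) u x (fun w => Y u w * X w (mg T u y)).
  rewrite setCK => ->; apply: eq_bigr => w Hw.
  have -> : mg (~: T) w u = mg T u w.
    by apply/ffunP => s; rewrite !mgE inE; case: (s \in T).
  have Hwy : eqon T w y by apply: eqon_trans Hw Hxy.
  congr (_ * _); apply: (supp_inv sX).
  - apply/eqonP => s Hs; rewrite mgE; case: ifP => // HT.
    by move: (AT s Hs); rewrite HT.
  - apply/eqonP => s Hs; rewrite mgE; case: ifP => // HT.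
    by move: (AT s Hs); rewrite HT.
  - apply/idP/idP => /eqonP H; apply/eqonP => s Hs; move: (H s Hs); rewrite !mgE;
      case: ifP => HsT // _; by move/eqonP: Hwy => ->.
rewrite (eq_bigr _ (fun u Hu => E1 u Hu)).
rewrite [RHS](bigID (fun z => eqon T z x)) /= [X in _ + X]big1 ?addr0; last first.
  by move=> z Hz; rewrite eqon_sym (negbTE Hz) !mul0r.
rewrite exchange_big /=; apply: eq_bigr => w Hw.
by rewrite eqon_sym Hw mul1r big_distrl.
Qed.

Lemma ptrT_cyc T D Y : supp T D -> ptrT T (opmul D Y) = ptrT T (opmul Y D).
Proof.
move=> sD; apply: op_ext => x y; rewrite /ptrT /opmul; congr (_ * _).
transitivity (\sum_(u | eqon (~:T) u x) \sum_(z | eqon (~:T) z x) D u z * Y z (mg T u y)).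
  apply: eq_bigr => u Hu.
  rewrite (bigID (fun z => eqon (~:T) z x)) /= [X in _ + X]big1 ?addr0 // => z Hz.
  rewrite (supp_zero sD) ?mul0r //; apply: contra Hz => Huz.
  by rewrite eqon_sym in Huz; exact: eqon_trans Huz Hu.
transitivity (\sum_(u | eqon (~:T) u x) \sum_(z | eqon (~:T) z x)
   Y u (mg T z y) * D (mg T z y) (mg T u y)); last first.
  apply: eq_bigr => u Hu.
  rewrite [RHS](bigID (fun z => eqon (~:T) z y)) /= [X in _ + X]big1 ?addr0; last first.
    move=> z Hz; rewrite (supp_zero sD) ?mulr0 //; apply: contra Hz => H.
    apply: eqon_trans H _; exact: mg_eqonC.
  by rewrite (sum_reindex_mg T y x).
rewrite [RHS]exchange_big /=; apply: eq_bigr => u Hu; apply: eq_bigr => z Hz.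
rewrite mulrC; congr (_ * _); apply: (supp_inv sD).
- by rewrite eqon_sym mg_eqon.
- by rewrite eqon_sym mg_eqon.
rewrite (eqon_transl _ (mg_eqonC T u y)) (eqon_transr _ (mg_eqonC T z y)) eqon_refl.
by apply: eqon_trans Hu _; rewrite eqon_sym.
Qed.

Lemma ptrT_comp T1 T2 Z : (forall s, s \in T1 -> s \notin T2) ->
  ptrT T1 (ptrT T2 Z) = ptrT (T1 :|: T2) Z.
Proof.
move=> D12; apply: op_ext => x y; rewrite /ptrT eqonU.
have T21 : forall s, s \in T2 -> s \in ~: T1.
  by move=> s Hs; rewrite inE; apply/negP => /D12; rewrite Hs.
have T2n1 : forall s, s \in T2 -> (s \in T1) = false.
  by move=> s Hs; apply/negP => /D12; rewrite Hs.
have E0 : forall u, eqon (~:T1) u x -> eqon T2 u (mg T1 u y) = eqon T2 x y.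
  move=> u /eqonP Hu; apply/eqonP/eqonP => H s Hs; move: (H s Hs);
  by rewrite mgE (T2n1 s Hs) Hu ?T21.
case: (boolP (eqon T1 x y && eqon T2 x y)) => Hb; last first.
  rewrite mul0r.
  case: (boolP (eqon T1 x y)) => H1; last by rewrite mul0r.
  rewrite mul1r big1 // => u Hu; rewrite E0 //.
  by move: Hb; rewrite H1 /= => /negbTE ->; rewrite mul0r.
case/andP: Hb => H1 H2; rewrite H1 /= !mul1r.
transitivity (\sum_(u | eqon (~:T1) u x) \sum_(w | eqon (~:T2) w u)
    Z w (mg (T1 :|: T2) w y)).
  apply: eq_bigr => u Hu; rewrite E0 // H2 mul1r; apply: eq_bigr => w /eqonP Hw.
  congr (Z w _); apply/ffunP => s; rewrite !mgE !inE.
  case: (boolP (s \in T2)) => HT2; first by rewrite orbT.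
  rewrite orbF; case: ifP => // HT1; rewrite Hw // inE HT2.
  by [].
rewrite (exchange_big_dep xpredT) //= [RHS]big_mkcond /=; apply: eq_bigr => w _.
case: ifP => Hw.
  rewrite (sum_collapse (i0 := mg T1 w x)) //.
  - apply/andP; split; first exact: mg_eqonC.
    apply/eqonP => s Hs; rewrite mgE; case: ifP => // HT1.
    move/eqonP: Hw => Hw; rewrite Hw // !inE negb_or HT1 /=; by move: Hs; rewrite inE.
  - move=> u /andP [/eqonP Hu /eqonP Hwu] nu; case/negP: nu; apply/eqP/ffunP => s.
    rewrite mgE; case: ifP => HT1.
      rewrite Hwu // inE; apply/negP => HT2; by rewrite (T2n1 s HT2) in HT1.
    by rewrite Hu // inE HT1.
rewrite big1 // => u /andP [/eqonP Hu /eqonP Hwu]; case/negP: Hw.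
apply/eqonP => s; rewrite !inE negb_or => /andP [n1 n2].
by rewrite Hwu ?Hu // inE.
Qed.

End Ptr.

Section Split.
Variables (K : fieldType) (d : nat) (S : finType).
Local Notation Op := (Op K d S).

Lemma ptrT_split (T1 T2 : {set S}) (X Y : Op) : (forall s, s \in T1 -> s \notin T2) ->
  supp (~: T2) X -> supp (~: T1) (ptrT T2 Y) ->
  ptrT (T1 :|: T2) (opmul X Y) = opmul (ptrT T1 X) (ptrT T2 Y).
Proof.
move=> D12 sX sY; rewrite -ptrT_comp // (ptrT_mull Y sX); last first.
  by move=> s; rewrite inE.
by rewrite (ptrT_mulr X sY) // => s; rewrite inE.
Qed.

End Split.

Section EmbPtr.
Variables (K : fieldType) (d : nat).

Lemma emb_ptrace (S' S G : finType) (g : S' -> S) (k : S -> G) (T : {set G})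
  (X : Op K d S) :
  injective k -> (forall s, (k s \in T) = (s \notin codom g)) -> T \subset cset k ->
  emb (k \o g) (ptrace g X) = ptrT T (emb k X).
Proof.
move=> kI HT /subsetP Tk; apply: op_ext => x y.
rewrite embE /ptrace /ptrT.
have TC : forall t, t \in ~: cset k -> t \in ~: T.
  by move=> t; rewrite !inE; apply: contra => /Tk; rewrite inE.
have Eb : forall w, eqon (~: T) w x ->
    eqon (~: cset k) w (mg T w y) = eqon (~: cset k) x y.
  move=> w /eqonP Hw; apply/eqonP/eqonP => H t Ht; move: (H t Ht);
  rewrite mgE; move: (TC t Ht); rewrite inE => /negbTE ->; by rewrite Hw ?TC.
have Eg : forall w : config d G, [ffun i => mg T w y (k i)] =
    glue g [ffun i => w (k i)] [ffun i => y ((k \o g) i)].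
  move=> w; apply/ffunP => s; rewrite !ffunE HT.
  case: pickP => [s' /eqP <-|H]; first by rewrite codom_f /= ffunE.
  case: ifP => // /negbFE /codomP [s' Es]; by move: (H s'); rewrite Es eqxx.
have EP : forall w : config d G, eqon (~: T) w x =
    eqon (~: cset k) w x && [forall s', [ffun i => w (k i)] (g s') == x (k (g s'))].
  move=> w; apply/eqonP/andP => [H|[/eqonP H1 /forallP H2] t].
    split; first by apply/eqonP => t /TC /H.
    apply/forallP => s'; rewrite ffunE; apply/eqP/H; rewrite inE HT codom_f.
    by [].
  rewrite inE => Ht; case: (boolP (t \in cset k)) => Hk; last by apply: H1; rewrite inE.
  case/csetP: Hk => s Es; subst t; move: Ht; rewrite HT negbK => /codomP [s' Es'].
  by move: (H2 s'); rewrite ffunE -Es' => /eqP.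
pose yg := [ffun i => y ((k \o g) i)].
have ER : \sum_(w | eqon (~:T) w x) emb k X w (mg T w y) =
    (\sum_(u : config d S | [forall s', u (g s') == x (k (g s'))]) X u (glue g u yg))
    * (eqon (~: cset k) x y)%:R.
  rewrite big_distrl /=.
  transitivity (\sum_(w | eqon (~:T) w x)
     (X [ffun i => w (k i)] (glue g [ffun i => w (k i)] yg) * (eqon (~:cset k) x y)%:R)).
    by apply: eq_bigr => w Hw; rewrite embE Eg Eb.
  rewrite (eq_bigl _ _ EP) big_mkcondr.
  rewrite (sum_reindex_emb x (fun w : config d G =>
     if [forall s', [ffun i => w (k i)] (g s') == x (k (g s'))] then
     X [ffun i => w (k i)] (glue g [ffun i => w (k i)] yg) * (eqon (~: cset k) x y)%:R
     else 0) kI).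
  rewrite [RHS]big_mkcond; apply: eq_bigr => u _.
  by rewrite ext_comp.
have EC : eqon (~: cset (k \o g)) x y = eqon T x y && eqon (~: cset k) x y.
  apply/eqonP/andP => [H|[/eqonP H1 /eqonP H2] t Ht].
    split; apply/eqonP => t Ht; apply: H.
      have := Tk t Ht; case/csetP => s Es; subst t.
      move: Ht; rewrite HT inE => Hs; apply/negP; case/csetP => s' /= /kI Es'.
      by move: Hs; rewrite Es' codom_f.
    move: Ht; rewrite !inE; apply: contra => /codomP [s' ->]; exact: (codom_f k (g s')).
  case: (boolP (t \in T)) => HtT; first exact: H1.
  case: (boolP (t \in cset k)) => Hk; last by apply: H2; rewrite inE.
  case/csetP: Hk => s Es; subst t; move: HtT; rewrite HT negbK => /codomP [s' Es'].
  by move: Ht; rewrite inE Es' => /negP; case; exact: (cset_f (k \o g)).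
rewrite ER EC -mulnb natrM mulrCA; congr (_ * (_ * _)).
by apply: eq_bigl => u; apply: eq_forallb => s'; rewrite ffunE.
Qed.

End EmbPtr.

Section Mon.
Variables (K : fieldType) (d : nat) (S : finType).
Local Notation Op := (Op K d S).
Local Notation "X ** Y" := (@opmul K d S X Y) (at level 40, left associativity).

Lemma opprod0 (F : 'I_0 -> Op) : opprod F = @opone K d S.
Proof. by rewrite /opprod big_ord0. Qed.

Lemma opprodS n (F : 'I_n.+1 -> Op) :
  opprod F = opprod (fun i : 'I_n => F (widen_ord (leqnSn n) i)) ** F ord_max.
Proof. by rewrite /opprod big_ord_recr. Qed.

Lemma comm_prod n (F : 'I_n -> Op) X : (forall i, X ** F i = F i ** X) ->
  X ** opprod F = opprod F ** X.
Proof.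
move=> H; rewrite /opprod; elim/big_rec: _ => [|i p _ IH].
  by rewrite opmul1 opmul1r.
by rewrite opmulA H -opmulA IH opmulA.
Qed.

Lemma telescope n (X Y : 'I_n -> Op) (D : nat -> Op) :
  (forall i : 'I_n, X i ** D i.+1 = D i ** Y i) ->
  opprod X ** D n = D 0%N ** opprod Y.
Proof.
elim: n X Y => [|n IH] X Y H; first by rewrite !opprod0 opmul1 opmul1r.
rewrite !opprodS -opmulA (H ord_max) /= opmulA (IH _ (fun i => Y (widen_ord (leqnSn n) i))).
  by rewrite opmulA.
by move=> i; rewrite H.
Qed.

Lemma rearr3 n (A B C : 'I_n -> Op) :
  (forall i j : 'I_n, (i < j)%N ->
     [/\ A j ** B i = B i ** A j, A j ** C i = C i ** A j & B j ** C i = C i ** B j]) ->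
  opprod A ** opprod B ** opprod C = opprod (fun i => A i ** B i ** C i).
Proof.
elim: n A B C => [|n IH] A B C H; first by rewrite !opprod0 !opmul1.
rewrite !opprodS -(IH (fun i => A (widen_ord (leqnSn n) i)) (fun i => B (widen_ord (leqnSn n) i))
  (fun i => C (widen_ord (leqnSn n) i))); last by move=> i j Hij; apply: H.
set PA := opprod _; set PB := opprod _; set PC := opprod _.
have Hlt : forall i : 'I_n, (widen_ord (leqnSn n) i < (@ord_max n))%N.
  by move=> i; rewrite /= ltn_ord.
have HAB : A ord_max ** PB = PB ** A ord_max.
  by apply: comm_prod => i; have [-> _ _] := H _ _ (Hlt i).
have HAC : A ord_max ** PC = PC ** A ord_max.
  by apply: comm_prod => i; have [_ -> _] := H _ _ (Hlt i).
have HBC : B ord_max ** PC = PC ** B ord_max.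
  by apply: comm_prod => i; have [_ _ ->] := H _ _ (Hlt i).
rewrite -!opmulA; congr (PA ** _).
rewrite (opmulA (A ord_max) PB) HAB -opmulA; congr (PB ** _).
rewrite (opmulA (B ord_max) PC) HBC -opmulA.
by rewrite (opmulA (A ord_max) PC) HAC -opmulA.
Qed.

End Mon.

Lemma inl_eq (A B : eqType) (x y : A) : (inl x == inl y :> A + B) = (x == y).
Proof. by apply/eqP/eqP => [[]|->]. Qed.
Lemma inr_eq (A B : eqType) (x y : B) : (inr x == inr y :> A + B) = (x == y).
Proof. by apply/eqP/eqP => [[]|->]. Qed.
Lemma inlr_eq (A B : eqType) (x : A) (y : B) : (inl x == inr y :> A + B) = false.
Proof. by apply/eqP. Qed.
Lemma inrl_eq (A B : eqType) (x : A) (y : B) : (inr y == inl x :> A + B) = false.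
Proof. by apply/eqP. Qed.
Definition sumE := (inl_eq, inr_eq, inlr_eq, inrl_eq).

Lemma emb_ext (K : fieldType) (d : nat) (S' S : finType) (f g : S' -> S) (X : Op K d S') :
  f =1 g -> emb f X = emb g X.
Proof. by move=> fg; have -> : f = g by apply: functional_extensionality. Qed.

Lemma emb_prod (K : fieldType) (d : nat) (S' S : finType) (f : S' -> S) n
  (F : 'I_n -> Op K d S') : injective f ->
  emb f (opprod F) = opprod (fun i => emb f (F i)).
Proof.
move=> fI; rewrite /opprod.
apply: (big_morph (emb f)) => [X Y|]; [exact: emb_mul | exact: emb_one].
Qed.

Lemma emb_inv (K : fieldType) (d : nat) (S' S : finType) (f : S' -> S) (X : Op K d S') :
  injective f -> opinvertible X ->
  exists Y, [/\ opmul (emb f X) (emb f Y) = @opone K d S,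
               opmul (emb f Y) (emb f X) = @opone K d S &
               forall A : {set S}, (forall i, f i \in A) -> supp A (emb f Y)].
Proof.
move=> fI [Y [H1 H2]]; exists Y; split.
- by rewrite -emb_mul // H1 emb_one.
- by rewrite -emb_mul // H2 emb_one.
- by move=> A HA; apply: supp_emb.
Qed.

Section Global.
Variables (L M : nat).

Definition Pl := ('I_(2*L) + 'I_(2*M) + bool)%type.
Definition p1 l : Pl := inl (inl l).
Definition p2 m : Pl := inl (inr m).
Definition p3 : Pl := inr false.
Definition p4 : Pl := inr true.
Definition G := (Pl * Pl)%type.
Definition isP1 (p : Pl) : bool := if p is inl (inl _) then true else false.

Definition beta (a b : Pl) (lb : 'I_(2*L) * bool) : G := (p1 lb.1, if lb.2 then b else a).
Definition kapR (a b : Pl) (o : option ('I_(2*L) * bool)) : G :=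
  if o is Some lb then beta a b lb else (a, b).
Definition tri (u v w : G) (i : 'I_3) : G :=
  if i == 0 :> nat then u else if i == 1 :> nat then v else w.
Definition io (lm : 'I_(2*L) * 'I_(2*M)) : G := (p1 lm.1, p2 lm.2).
Definition kapT (c : Pl) (s : ('I_(2*L) * 'I_(2*M) + 'I_(2*L))%type) : G :=
  match s with inl lm => io lm | inr l => (p1 l, c) end.
Definition phi (q1 q2 q3 q4 : Pl) (i : 'I_6) : G :=
  nth (q3, q4) [:: (q1, q2); (q1, q3); (q1, q4); (q2, q3); (q2, q4)] i.

Lemma kapR_trlab a b l : kapR a b \o trlab l =1 tri (p1 l, a) (p1 l, b) (a, b).
Proof. by move=> i; rewrite /= /trlab /tri; case: ifP => //; case: ifP. Qed.

Lemma kapT_tlab c m : kapT c \o @tlab L M m =1 beta (p2 m) c.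
Proof. by move=> [l b]; rewrite /tlab /=; case: b. Qed.

Lemma kapT_inl c : kapT c \o inl =1 io.
Proof. by []. Qed.

Lemma kapR_Some a b : kapR a b \o Some =1 beta a b.
Proof. by []. Qed.

Lemma phi_f123 q1 q2 q3 q4 : phi q1 q2 q3 q4 \o f123 =1 tri (q1, q2) (q1, q3) (q2, q3).
Proof. by move=> [[|[|[|n]]] Hi] //=; rewrite /f123 /lab /phi /= inordK. Qed.
Lemma phi_f124 q1 q2 q3 q4 : phi q1 q2 q3 q4 \o f124 =1 tri (q1, q2) (q1, q4) (q2, q4).
Proof. by move=> [[|[|[|n]]] Hi] //=; rewrite /f124 /lab /phi /= inordK. Qed.
Lemma phi_f134 q1 q2 q3 q4 : phi q1 q2 q3 q4 \o f134 =1 tri (q1, q3) (q1, q4) (q3, q4).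
Proof. by move=> [[|[|[|n]]] Hi] //=; rewrite /f134 /lab /phi /= inordK. Qed.
Lemma phi_f234 q1 q2 q3 q4 : phi q1 q2 q3 q4 \o f234 =1 tri (q2, q3) (q2, q4) (q3, q4).
Proof. by move=> [[|[|[|n]]] Hi] //=; rewrite /f234 /lab /phi /= inordK. Qed.

End Global.

Ltac gsimpl := rewrite /p1 /p2 /p3 /p4 ?xpair_eqE ?sumE ?eqxx ?andbF ?andbT ?andFb ?andTb /=.

Section Inj.
Variables (L M : nat).
Local Notation p1 := (@p1 L M).
Local Notation p2 := (@p2 L M).
Local Notation p3 := (@p3 L M).
Local Notation p4 := (@p4 L M).

Lemma beta_inj (a b : Pl L M) : a != b -> injective (beta a b).
Proof.
move=> ab [l x] [l' y]; rewrite /beta /= => [[El Eb]]; case: El => ->.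
case: x y Eb => [] [] // E; by move: ab; rewrite E eqxx.
Qed.

Lemma kapR_inj (a b : Pl L M) : a != b -> ~~ isP1 a -> injective (kapR a b).
Proof.
move=> ab na [x|] [y|] //=.
- by move/(beta_inj ab) ->.
- by case: x => l u [] El _; move: na; rewrite -El.
- by case: y => l u [] El _; move: na; rewrite El.
Qed.

Lemma kapT_inj (c : Pl L M) : (forall m, c != p2 m) -> injective (kapT c).
Proof.
move=> hc [[l m]|l] [[l' m']|l'] //=; rewrite /io /=.
- by case=> -> ->.
- by case=> _ E; move: (hc m); rewrite -E eqxx.
- by case=> _ E; move: (hc m'); rewrite E eqxx.
- by case=> ->.
Qed.

Lemma io_inj : injective (@io L M).
Proof. by move=> [l m] [l' m']; rewrite /io /=; case=> -> ->. Qed.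

Lemma phi_inj l m : injective (phi (p1 l) (p2 m) p3 p4).
Proof.
move=> [[|[|[|[|[|[|i]]]]]] Hi] [[|[|[|[|[|[|j]]]]]] Hj] //; rewrite /phi /= => E;
  first [exact: val_inj | by case: E].
Qed.

End Inj.

Lemma inr_codom_inl (A B : finType) (b : B) : (inr b \in codom (@inl A B)) = false.
Proof. by apply/negP => /codomP [x]. Qed.
Lemma inl_codom_inl (A B : finType) (a : A) : (inl a \in codom (@inl A B)).
Proof. exact: codom_f. Qed.
Lemma None_codom_Some (A : finType) : (None \in codom (@Some A)) = false.
Proof. by apply/negP => /codomP [x]. Qed.
Lemma Some_codom_Some (A : finType) (a : A) : (Some a \in codom (@Some A)).
Proof. exact: codom_f. Qed.

Definition Tset (L M : nat) (c : Pl L M) : {set G L M} := [set t | isP1 t.1 && (t.2 == c)].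

Section Glob.
Variables (K : fieldType) (d : nat) (C : Type) (L M : nat).
Variables (r1 : 'I_(2 * L) -> C) (r2 : 'I_(2 * M) -> C).
Local Notation p1 := (@p1 L M).
Local Notation p2 := (@p2 L M).
Local Notation p3 := (@p3 L M).
Local Notation p4 := (@p4 L M).

Lemma boldR_glob (X : RMap K d C) (a b : Pl L M) s ra rb :
  a != b -> ~~ isP1 a ->
  emb (beta a b) (boldR r1 X s ra rb) =
  ptrT [set (a, b)] (opprod (fun l => emb (tri (p1 l, a) (p1 l, b) (a, b))
                                       (X (s + (l.+1)%:R) (r1 l) ra rb))).
Proof.
move=> ab na; have kI := kapR_inj ab na.
rewrite -(emb_ext _ (kapR_Some a b)) /boldR (emb_ptrace (T := [set (a, b)]) _ kI); last 2 first.
- move=> [[l u]|]; rewrite inE /= ?None_codom_Some ?Some_codom_Some ?eqxx //.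
  rewrite /beta xpair_eqE; apply/negbTE; apply/negP => /andP [/eqP E _].
  by move: na; rewrite -E.
- apply/subsetP => t; rewrite inE => /eqP ->; apply/csetP; by exists None.
rewrite emb_prod //; congr ptrT; congr opprod; apply: functional_extensionality => l.
by rewrite emb_comp // (emb_ext _ (kapR_trlab a b l)).
Qed.

Lemma Tlayer_glob (X : RMap K d C) (c : Pl L M) sigma rr :
  (forall m, c != p2 m) -> c != p3 \/ c != p4 -> ~~ isP1 c ->
  emb (@io L M) (Tlayer r1 r2 X sigma rr) =
  ptrT (Tset c) (opprod (fun m => emb (beta (p2 m) c)
                     (boldR r1 X (sigma + (m.+1)%:R) (r2 m) rr))).
Proof.
move=> hc _ hc1; have kI := kapT_inj hc.
rewrite -(emb_ext _ (kapT_inl c)) /Tlayer (emb_ptrace (T := Tset c) _ kI); last 2 first.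
- move=> [[l m]|l]; rewrite inE /= ?inr_codom_inl ?inl_codom_inl ?eqxx //=.
  by rewrite eq_sym (negbTE (hc m)).
- apply/subsetP => [[t1 t2]]; rewrite inE /= => /andP [H1 /eqP ->].
  case: t1 H1 => [[l|m]|bb] // _; apply/csetP; by exists (inr l).
rewrite emb_prod //; congr ptrT; congr opprod; apply: functional_extensionality => m.
by rewrite emb_comp // (emb_ext _ (kapT_tlab c m)).
Qed.

End Glob.

Section TriLemmas.
Variables (K : fieldType) (d : nat) (L M : nat).
Local Notation G := (G L M).

Lemma tri_inj (u v w : G) : u != v -> u != w -> v != w -> injective (tri u v w).
Proof.
move=> uv uw vw [[|[|[|i]]] Hi] [[|[|[|j]]] Hj] //; rewrite /tri /= => E;
  first [exact: val_inj | by move: uv uw vw; rewrite E eqxx ?andbF].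
Qed.

Lemma supp_tri (A : {set G}) (u v w : G) (X : Op K d 'I_3) :
  u \in A -> v \in A -> w \in A -> supp A (emb (tri u v w) X).
Proof.
move=> hu hv hw; apply: supp_emb => i; rewrite /tri.
by case: ifP => _ //; case: ifP.
Qed.

Lemma comm_tri (u1 u2 u3 v1 v2 v3 : G) (X Y : Op K d 'I_3) :
  all (fun u => all (fun v => u != v) [:: v1; v2; v3]) [:: u1; u2; u3] ->
  opmul (emb (tri u1 u2 u3) X) (emb (tri v1 v2 v3) Y) =
  opmul (emb (tri v1 v2 v3) Y) (emb (tri u1 u2 u3) X).
Proof.
move=> H; apply: (op_comm (A := [set u1; u2; u3]) (B := [set v1; v2; v3])).
- by apply: supp_tri; rewrite !inE eqxx ?orbT.
- by apply: supp_tri; rewrite !inE eqxx ?orbT.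
move=> s; rewrite !inE => Hs; move: H => /=; rewrite !andbT.
case/and3P => /and3P [h11 h12 h13] /and3P [h21 h22 h23] /and3P [h31 h32 h33].
have [E|E|E] : [\/ s = u1, s = u2 | s = u3].
  by case/orP: Hs => [/orP [] /eqP E|/eqP E]; [exact: Or31 | exact: Or32 | exact: Or33].
all: by rewrite E !negb_or ?h11 ?h12 ?h13 ?h21 ?h22 ?h23 ?h31 ?h32 ?h33.
Qed.

End TriLemmas.

Section ConjTrace.
Variables (K : fieldType) (d : nat) (S : finType).
Local Notation Op := (Op K d S).
Local Notation "X ** Y" := (@opmul K d S X Y) (at level 40, left associativity).

Lemma conj_trace (U : {set S}) n (Xf Yf : 'I_n -> Op) (D : nat -> Op) :
  (forall i : 'I_n, Xf i ** D i.+1 = D i ** Yf i) -> D n = D 0%N -> supp U (D 0%N) ->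
  (exists E, D 0%N ** E = @opone K d S /\ E ** D 0%N = @opone K d S) ->
  ptrT U (opprod Xf) = ptrT U (opprod Yf).
Proof.
move=> H Dn sD [E [DE ED]].
have T := telescope H; rewrite Dn in T.
have -> : opprod Xf = D 0%N ** (opprod Yf ** E).
  by rewrite opmulA -T -opmulA DE opmul1r.
by rewrite ptrT_cyc // -opmulA ED opmul1r.
Qed.

End ConjTrace.

Section Level1.
Variables (K : fieldType) (d : nat) (C : Type) (L M : nat).
Variables (R R1 R2 R3 : RMap K d C) (r1 : 'I_(2 * L) -> C).
Local Notation p1 := (@p1 L M).
Local Notation p2 := (@p2 L M).
Local Notation p3 := (@p3 L M).
Local Notation p4 := (@p4 L M).
Local Notation "X ** Y" := (@opmul K d _ X Y) (at level 40, left associativity).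

Lemma BTE_glob (tau tau1 : 'Z_2) (l : 'I_(2 * L)) (m : 'I_(2 * M)) ra rb rc :
  BTE R R1 R2 R3 tau -> tau1 = tau + 1 ->
  emb (tri (p1 l, p2 m) (p1 l, p3) (p2 m, p3)) (R tau (r1 l) ra rb)
  ** emb (tri (p1 l, p2 m) (p1 l, p4) (p2 m, p4)) (R1 tau1 (r1 l) ra rc)
  ** emb (tri (p1 l, p3) (p1 l, p4) (p3, p4)) (R2 tau (r1 l) rb rc)
  ** emb (tri (p2 m, p3) (p2 m, p4) (p3, p4)) (R3 tau1 ra rb rc)
  = emb (tri (p2 m, p3) (p2 m, p4) (p3, p4)) (R3 tau ra rb rc)
  ** emb (tri (p1 l, p3) (p1 l, p4) (p3, p4)) (R2 tau1 (r1 l) rb rc)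
  ** emb (tri (p1 l, p2 m) (p1 l, p4) (p2 m, p4)) (R1 tau (r1 l) ra rc)
  ** emb (tri (p1 l, p2 m) (p1 l, p3) (p2 m, p3)) (R tau1 (r1 l) ra rb).
Proof.
move=> H ->; have := congr1 (emb (phi (p1 l) (p2 m) p3 p4)) (H (r1 l) ra rb rc).
have pI := @phi_inj L M l m.
rewrite !emb_mul // !emb_comp //.
by rewrite !(emb_ext _ (phi_f123 _ _ _ _)) !(emb_ext _ (phi_f124 _ _ _ _))
  !(emb_ext _ (phi_f134 _ _ _ _)) !(emb_ext _ (phi_f234 _ _ _ _)).
Qed.

Lemma Z2_2L : ((2 * L)%N%:R : 'Z_2) = 0.
Proof. by rewrite natrM (_ : (2%:R : 'Z_2) = 0) ?mul0r //; apply/val_inj. Qed.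

Lemma redYBE (hB : forall sg, BTE R R1 R2 R3 sg)
  (hI : forall sg a b c, opinvertible (R3 sg a b c)) (m : 'I_(2 * M)) (s : 'Z_2) (ra rb rc : C) :
  emb (beta (p2 m) p3) (boldR r1 R s ra rb)
  ** emb (beta (p2 m) p4) (boldR r1 R1 (s + 1) ra rc)
  ** emb (beta p3 p4) (boldR r1 R2 s rb rc)
  = emb (beta p3 p4) (boldR r1 R2 (s + 1) rb rc)
  ** emb (beta (p2 m) p4) (boldR r1 R1 s ra rc)
  ** emb (beta (p2 m) p3) (boldR r1 R (s + 1) ra rb).
Proof.
have ab : p2 m != p3 by rewrite /p2 /p3 sumE.
have ac : p2 m != p4 by rewrite /p2 /p4 sumE.
have bc : p3 != p4 by rewrite /p3 /p4 sumE.
have na : ~~ isP1 (p2 m) by [].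
have nb : ~~ isP1 p3 by [].
set Tab := [set (p2 m, p3)]; set Tac := [set (p2 m, p4)]; set Tbc := [set (p3, p4)].
have S1 : supp (~: Tab) (emb (beta (p2 m) p4) (boldR r1 R1 (s + 1) ra rc)).
  by apply: supp_emb => [[l []]]; rewrite !inE /beta /=; gsimpl.
have S2 : supp (~: (Tab :|: Tac)) (emb (beta p3 p4) (boldR r1 R2 s rb rc)).
  by apply: supp_emb => [[l []]]; rewrite !inE /beta /=; gsimpl.
have S3 : supp (~: Tbc) (emb (beta (p2 m) p4) (boldR r1 R1 s ra rc)).
  by apply: supp_emb => [[l []]]; rewrite !inE /beta /=; gsimpl.
have S4 : supp (~: (Tbc :|: Tac)) (emb (beta (p2 m) p3) (boldR r1 R (s + 1) ra rb)).
  by apply: supp_emb => [[l []]]; rewrite !inE /beta /=; gsimpl.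
rewrite !boldR_glob ?ab ?ac ?bc ?na ?nb // in S1 S2 S3 S4 *.
have D1 : forall (u v : G L M) (U : {set G L M}), u \notin U -> forall t, t \in [set u] -> t \notin U.
  by move=> u v U hu t; rewrite inE => /eqP ->.
rewrite -(ptrT_split (T1 := [set (p2 m, p3)]) (T2 := [set (p2 m, p4)])) //;
  [| by move=> t; rewrite !inE => /eqP ->; gsimpl
   | by apply: supp_prod => l; apply: supp_tri; rewrite !inE; gsimpl].
rewrite -(ptrT_split (T1 := [set (p2 m, p3); (p2 m, p4)]) (T2 := [set (p3, p4)])) //;
  [| by move=> t; rewrite !inE => /orP [] /eqP ->; gsimpl
   | by apply: supp_mul; apply: supp_prod => l; apply: supp_tri; rewrite !inE; gsimpl].
rewrite -(ptrT_split (T1 := [set (p3, p4)]) (T2 := [set (p2 m, p4)])) //;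
  [| by move=> t; rewrite !inE => /eqP ->; gsimpl
   | by apply: supp_prod => l; apply: supp_tri; rewrite !inE; gsimpl].
rewrite -(ptrT_split (T1 := [set (p3, p4); (p2 m, p4)]) (T2 := [set (p2 m, p3)])) //;
  [| by move=> t; rewrite !inE => /orP [] /eqP ->; gsimpl
   | by apply: supp_mul; apply: supp_prod => l; apply: supp_tri; rewrite !inE; gsimpl].
have -> : [set (p3, p4); (p2 m, p4)] :|: [set (p2 m, p3)] =
          [set (p2 m, p3); (p2 m, p4)] :|: [set (p3, p4)].
  by rewrite setUC (setUC [set (p3, p4)]) setUA.
rewrite !rearr3; last 2 first.
- move=> i j hij /=.
  have nji : (j == i) = false by rewrite -val_eqE /= (gtn_eqF hij).
  have nij : (i == j) = false by rewrite -val_eqE /= (ltn_eqF hij).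
  by split; apply: comm_tri; rewrite /=; gsimpl; rewrite ?nij ?nji.
- move=> i j hij /=.
  have nji : (j == i) = false by rewrite -val_eqE /= (gtn_eqF hij).
  have nij : (i == j) = false by rewrite -val_eqE /= (ltn_eqF hij).
  by split; apply: comm_tri; rewrite /=; gsimpl; rewrite ?nij ?nji.
have tI : injective (tri (p2 m, p3) (p2 m, p4) (p3, p4)).
  by apply: tri_inj; gsimpl.
apply: (conj_trace (D := fun k => emb (tri (p2 m, p3) (p2 m, p4) (p3, p4))
                                     (R3 (s + k.+1%:R) ra rb rc))).
- move=> l /=; rewrite (_ : s + l.+2%:R = s + 1 + l.+1%:R); last first.
    by rewrite addrAC -addrA natr1.
  rewrite !opmulA; apply: BTE_glob => //; by rewrite addrAC.
- by rewrite /= -!natr1 Z2_2L.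
- by apply: supp_tri; rewrite !inE; gsimpl.
have [E [h1 h2 _]] := emb_inv tI (hI (s + 0.+1%:R) ra rb rc).
by exists (emb (tri (p2 m, p3) (p2 m, p4) (p3, p4)) E).
Qed.

End Level1.

Lemma emb_inj (K : fieldType) (d : nat) (S' S : finType) (f : S' -> S) (s0 : S')
  (X Y : Op K d S') : injective f -> emb f X = emb f Y -> X = Y.
Proof.
move=> fI E; apply: op_ext => a b.
pose c : config d S := [ffun _ => a s0].
have H : forall Z : Op K d S', Z a b = emb f Z (ext f c a) (ext f c b).
  move=> Z; rewrite embE !ext_comp //.
  have -> : eqon (~: cset f) (ext f c a) (ext f c b).
    by apply: eqon_trans (ext_off f c a) _; rewrite eqon_sym ext_off.
  by rewrite mulr1.
by rewrite H E -H.
Qed.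

Section Level2.
Variables (K : fieldType) (d : nat) (L M : nat).
Local Notation p1 := (@p1 L M).
Local Notation p2 := (@p2 L M).
Local Notation p3 := (@p3 L M).
Local Notation p4 := (@p4 L M).
Local Notation "X ** Y" := (@opmul K d _ X Y) (at level 40, left associativity).

Lemma comm_beta (a b c e : Pl L M) (X Y : Op K d ('I_(2 * L) * bool)%type) :
  a != c -> a != e -> b != c -> b != e ->
  emb (beta a b) X ** emb (beta c e) Y = emb (beta c e) Y ** emb (beta a b) X.
Proof.
move=> ac ae bc be.
apply: (op_comm (A := [set t : G L M | (t.2 == a) || (t.2 == b)])
                (B := [set t : G L M | (t.2 == c) || (t.2 == e)])).
- by apply: supp_emb => [[l []]]; rewrite inE /beta /= eqxx ?orbT.
- by apply: supp_emb => [[l []]]; rewrite inE /beta /= eqxx ?orbT.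
move=> t; rewrite !inE => /orP [] /eqP ->; rewrite negb_or.
  by rewrite ac ae.
by rewrite bc be.
Qed.

Lemma rearr2 n (A B : 'I_n -> Op K d (G L M)) :
  (forall i j : 'I_n, (i < j)%N -> A j ** B i = B i ** A j) ->
  opprod A ** opprod B = opprod (fun i => A i ** B i).
Proof.
elim: n A B => [|n IH] A B H; first by rewrite !opprod0 !opmul1.
rewrite !opprodS -(IH (fun i => A (widen_ord (leqnSn n) i)) (fun i => B (widen_ord (leqnSn n) i)));
  last by move=> i j Hij; apply: H.
set PA := opprod _; set PB := opprod _.
have HAB : A ord_max ** PB = PB ** A ord_max.
  by apply: comm_prod => i; apply: H; rewrite /= ltn_ord.
by rewrite -!opmulA; congr (PA ** _); rewrite (opmulA (A ord_max) PB) HAB -opmulA.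
Qed.

End Level2.

Lemma Z2_11 : (1 + 1 : 'Z_2) = 0.
Proof. by apply/val_inj. Qed.

Theorem mainTheorem2 (Rr : realType) (d : nat) (C : Type) (L M : nat)
  (hL : (1 <= L)%N) (hM : (1 <= M)%N)
  (R R1 R2 R3 : RMap Rr[i] d C)
  (r1 : 'I_(2 * L) -> C) (r2 : 'I_(2 * M) -> C) :
  (forall sigma : 'Z_2, BTE R R1 R2 R3 sigma) ->
  (forall (sigma : 'Z_2) (a b c : C), opinvertible (R3 sigma a b c)) ->
  (forall (sigma : 'Z_2) (ra rb : C), opinvertible (boldR r1 R2 sigma ra rb)) ->
  forall (sigma : 'Z_2) (r r' : C),
    opmul (Tlayer r1 r2 R sigma r) (Tlayer r1 r2 R1 (sigma + 1) r')
    = opmul (Tlayer r1 r2 R1 sigma r') (Tlayer r1 r2 R (sigma + 1) r).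
Proof.
move=> hB hI hC sigma r r'.
have hL2 : (0 < 2 * L)%N by rewrite muln_gt0.
have hM2 : (0 < 2 * M)%N by rewrite muln_gt0.
pose s0 : ('I_(2 * L) * 'I_(2 * M))%type := (Ordinal hL2, Ordinal hM2).
have ioI := @io_inj L M.
apply: (emb_inj s0 ioI); rewrite !(emb_mul _ _ ioI).
have h3 : forall m, @p3 L M != p2 L m by move=> m; rewrite /p2 /p3 sumE.
have h4 : forall m, @p4 L M != p2 L m by move=> m; rewrite /p2 /p4 sumE.
have n34 : @p3 L M != p4 L M by rewrite /p3 /p4 sumE.
have TG3 := fun X s rr => Tlayer_glob r1 r2 X s rr h3 (or_intror n34) isT.
have TG4 := fun X s rr => Tlayer_glob r1 r2 X s rr h4 (or_introl n34) isT.
have SA : supp (~: Tset (p3 L M)) (emb (@io L M) (Tlayer r1 r2 R1 (sigma + 1) r')).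
  by apply: supp_emb => [[l m]]; rewrite !inE /io /=; gsimpl.
have SB : supp (~: Tset (p4 L M)) (emb (@io L M) (Tlayer r1 r2 R (sigma + 1) r)).
  by apply: supp_emb => [[l m]]; rewrite !inE /io /=; gsimpl.
rewrite (TG3 _ _ R sigma r) (TG4 _ _ R1 (sigma + 1) r') (TG4 _ _ R1 sigma r') (TG3 _ _ R (sigma + 1) r).
rewrite (TG4 _ _ R1 (sigma + 1) r') in SA; rewrite (TG3 _ _ R (sigma + 1) r) in SB.
rewrite -(ptrT_split (T1 := Tset (p3 L M)) (T2 := Tset (p4 L M))) //;
  [| by move=> t; rewrite !inE => /andP [_ /eqP ->]; gsimpl
   | by apply: supp_prod => m; apply: supp_emb => [[l []]]; rewrite !inE /beta /=; gsimpl].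
rewrite -(ptrT_split (T1 := Tset (p4 L M)) (T2 := Tset (p3 L M))) //;
  [| by move=> t; rewrite !inE => /andP [_ /eqP ->]; gsimpl
   | by apply: supp_prod => m; apply: supp_emb => [[l []]]; rewrite !inE /beta /=; gsimpl].
rewrite (setUC (Tset (p4 L M))) !rearr2; last 2 first.
- move=> i j hij /=.
  have nji : (j == i) = false by rewrite -val_eqE /= (gtn_eqF hij).
  by apply: comm_beta; rewrite /p2 /p3 /p4 ?sumE ?nji.
- move=> i j hij /=.
  have nji : (j == i) = false by rewrite -val_eqE /= (gtn_eqF hij).
  by apply: comm_beta; rewrite /p2 /p3 /p4 ?sumE ?nji.
apply: (conj_trace (D := fun k => emb (beta (p3 L M) (p4 L M))
                                   (boldR r1 R2 (sigma + k%:R) r r'))).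
- move=> m /=.
  have e : sigma + m%:R = sigma + m.+1%:R + 1.
    by rewrite -natr1 !addrA -(addrA _ 1 1) Z2_11 addr0.
  rewrite e (addrAC sigma 1) !opmulA.
  exact: (redYBE r1 hB hI m (sigma + m.+1%:R) (r2 m) r r').
- by rewrite /= Z2_2L.
- by apply: supp_emb => [[l []]]; rewrite !inE /beta /=; gsimpl.
have [E [e1 e2 _]] := emb_inv (beta_inj n34) (hC (sigma + 0%:R) r r').
by exists (emb (beta (p3 L M) (p4 L M)) E).
Qed.
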